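(* Let $\nu\in\mathcal{P}(\Omega)$ be absolutely continuous, and for each $N\in\mathbb{N}^*$ let $(\mathcal{A},X)$ be a tagged partition of $\Omega$ associated with $\nu$, with $X=(x_1,\dots,x_N)$, and $\nu^E_X=\frac1N\sum_{i=1}^N\delta_{x_i}$. (1) For every function $f$ on $\Omega$ with compact support that is bounded and $\nu$-almost everywhere continuous, $\int_\Omega f\,d(\nu-\nu^E_X)=\int_\Omega f\,d\nu-\frac1N\sum_{i=1}^Nf(x_i)=o(1)$ as $N\to+\infty$. Consequently $\nu^E_X$ converges weakly to $\nu$, and $W_1(\nu^E_X,\nu)=o(1)$ as $N\to+\infty$ if moreover $\Omega$ has compact closure. (2) For every $\alpha\in(0,1]$, $N\in\mathbb{N}^*$ and every compactly supported $f\in\mathscr{C}^{0,\alpha}(\Omega)$, $\big|\int_\Omega f\,d\nu-\frac1N\sum_{i=1}^Nf(x_i)\big|\le\frac{C_\Omega^\alpha}{N^\alpha}\operatorname{Hol}_\alpha(f)$. In particular $W_1(\nu^E_X,\nu)\le\frac{C_\Omega}N$.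
   Context: $(\Omega,d_\Omega)$ is a complete metric space carrying a Lebesgue-type reference measure for absolute continuity. A tagged partition of $\Omega$ associated with $\nu$: disjoint subsets $\Omega_1,\dots,\Omega_N$ with union $\Omega$, $\nu(\Omega_i)=1/N$, $\mathrm{diam}(\Omega_i)\le C_\Omega/N$ for a constant $C_\Omega>0$ independent of $N$, and points $x_i\in\Omega_i$. $\operatorname{Hol}_\alpha(f)=\sup_{x\ne x'}|f(x)-f(x')|/d_\Omega(x,x')^\alpha$; $W_1$ is the 1-Wasserstein distance. *)

(* Defs.v *)
From HB Require Import structures.
From mathcomp Require Import all_boot all_order all_algebra.
From mathcomp Require Import all_classical all_reals all_analysis.

Set Implicit Arguments.
Unset Strict Implicit.
Unset Printing Implicit Defensive.

Import Order.TTheory GRing.Theory Num.Theory.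
Import numFieldNormedType.Exports.
Local Open Scope classical_set_scope.
Local Open Scope ring_scope.

(* complete metric spaces: a metric structure whose uniformity is complete
   (complete types are pointed, i.e. nonempty; Omega carries a probability
   measure, so it is nonempty anyway) *)
#[short(type="completeMetricType")]
HB.structure Definition CompleteMetric (K : numDomainType) :=
  { M of Metric K M & Complete M }.

Section Defs.
Context {R : realType}.

Definition borelT (T : completeMetricType R) := g_sigma_algebraType (@open T).

Definition tagged_partition (T : completeMetricType R) (nu : set (borelT T) -> \bar R)
    (C : R) (N : nat) (A : 'I_N -> set T) (X : 'I_N -> T) : Prop :=
  (forall i, @measurable _ (borelT T) (A i)) /\
  (forall i j, i <> j -> A i `&` A j = set0) /\
  (forall x, exists i, A i x) /\
  (forall i, nu (A i) = (N%:R^-1)%:E) /\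
  (forall i y z, A i y -> A i z -> @mdist R T y z <= C / N%:R) /\
  (forall i, A i (X i)).

Definition empirical (T : completeMetricType R) (N : nat) (X : 'I_N -> T)
    : set (borelT T) -> \bar R :=
  fun B => ((N%:R^-1)%:E * \sum_(i < N) \d_(X i : borelT T) B)%E.

Definition coupling (T : completeMetricType R) (mu nu : set (borelT T) -> \bar R)
    (P : probability (borelT T * borelT T)%type R) : Prop :=
  forall B : set (borelT T), measurable B ->
    P (B `*` setT) = mu B /\ P (setT `*` B) = nu B.

Definition W1 (T : completeMetricType R) (mu nu : set (borelT T) -> \bar R) : \bar R :=
  ereal_inf [set (\int[P]_z (@mdist R T z.1 z.2)%:E)%E | P in coupling mu nu].

(* Hoelder seminorm Hol_alpha(f) (possibly +oo); the supremum is taken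
   together with 0 so that it is 0 (not -oo) on a one-point space *)
Definition hol (T : completeMetricType R) (a : R) (f : T -> R) : \bar R :=
  ereal_sup [set e | e = 0%E \/ exists x y : T, x <> y /\
                 e = (`|f x - f y| / (@mdist R T x y) `^ a)%:E].

Definition compact_support (T : completeMetricType R) (f : T -> R) : Prop :=
  compact (closure [set x | f x != 0]).

End Defs.

Definition continuous_at_pt {R : realType} (T : completeMetricType R)
  (f : T -> R) (x : T) : Prop := {for x, continuous f}.

(* Main.v *)
Require Import Defs.
From HB Require Import structures.
From mathcomp Require Import all_boot all_order all_algebra.
From mathcomp Require Import all_classical all_reals all_analysis.
Import Order.TTheory GRing.Theory Num.Theory.
Import numFieldNormedType.Exports.
From mathcomp Require Import measurable_realfun.
Local Open Scope classical_set_scope.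
Local Open Scope ring_scope.

Lemma bnd_int {R : realType} d (T : measurableType d) (nu : probability T R) (f : T -> R) (M : R) :
  measurable_fun setT f -> (forall x, `|f x| <= M) -> nu.-integrable setT (EFin \o f).
Proof.
move=> mf hM; apply: measurable_bounded_integrable => //.
  apply: (@le_lt_trans _ _ 1%E); last exact: ltry.
  by rewrite le_eqVlt; apply/orP; left; apply/eqP; exact: probability_setT.
exists M; split; first exact: num_real.
move=> r Mr x _; exact: le_trans (hM x) (ltW Mr).
Qed.

Lemma le_integral_nm d (T : measurableType d) (R : realType)
  (mu : {measure set T -> \bar R}) (f g : T -> \bar R) :
  (forall x, 0 <= f x)%E -> (forall x, f x <= g x)%E ->
  (\int[mu]_x f x <= \int[mu]_x g x)%E.
Proof.
move=> f0 fg; have g0 x := le_trans (f0 x) (fg x).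
rewrite !ge0_integralTE //.
apply: ge_ereal_sup => _ [h hf <-]; apply: ereal_sup_ubound; exists h => // x.
exact: le_trans (hf x) (fg x).
Qed.

Section fixedN.
Context {R : realType} (T : completeMetricType R) (nu : probability (borelT T) R)
  (C : R) (N : nat) (A : 'I_N -> set T) (X : 'I_N -> T)
  (HP : tagged_partition nu C A X) (N0 : (0 < N)%N).

Lemma pmA i : @measurable _ (borelT T) (A i).
Proof. by case: HP. Qed.

Lemma part_uniq i j x : A i x -> A j x -> i = j.
Proof.
case: HP => _ [hd _] Ai Aj; apply: contrapT => ij.
by have := hd _ _ ij; rewrite -subset0 => /(_ x); apply.
Qed.

Lemma part_cover x : exists i, A i x.
Proof. by case: HP => _ [_ []]. Qed.

Lemma part_nu i : nu (A i) = (N%:R^-1)%:E.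
Proof. by case: HP => _ [_ [_ [h _]]]. Qed.

Lemma part_diam i y z : A i y -> A i z -> @mdist R T y z <= C / N%:R.
Proof. by case: HP => _ [_ [_ [_ [h _]]]]; apply: h. Qed.

Lemma part_X i : A i (X i).
Proof. by case: HP => _ [_ [_ [_ [_ h]]]]. Qed.

Definition step (c : 'I_N -> R) (x : T) : R := \sum_(i < N) c i * \1_(A i) x.

Lemma stepE c i x : A i x -> step c x = c i.
Proof.
move=> Aix; rewrite /step (bigD1 i) //= indicE mem_set // mulr1 big1 ?addr0 //.
move=> j ji; rewrite indicE memNset ?mulr0 //; move=> Ajx; move/eqP: ji; apply.
exact: part_uniq Ajx Aix.
Qed.

Lemma step_meas c : @measurable_fun _ _ (borelT T) R setT (step c).
Proof.
apply: measurable_sum => i; apply: measurable_realfun.measurable_funM => //.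
exact: measurable_realfun.measurable_indic (pmA i).
Qed.

Lemma step_int c : nu.-integrable setT (EFin \o step c).
Proof.
have -> : EFin \o step c = fun x => (\sum_(i < N) (c i)%:E * (\1_(A i) x)%:E)%E.
  by apply/funext => x /=; rewrite /step -sumEFin; apply: eq_bigr => i _; rewrite EFinM.
apply: integrable_sum => // i _; apply: integrableZl => //; exact: (integrable_indic nu (pmA i)).
Qed.

Lemma step_integral c :
  (\int[nu]_x (step c x)%:E = (N%:R^-1 * \sum_(i < N) c i)%:E)%E.
Proof.
have -> : (fun x => (step c x)%:E) = fun x => (\sum_(i < N) (c i)%:E * (\1_(A i) x)%:E)%E.
  by apply/funext => x /=; rewrite /step -sumEFin; apply: eq_bigr => i _; rewrite EFinM.
rewrite integral_sum //; last first.
  by move=> i; apply: integrableZl => //; exact: (integrable_indic nu (pmA i)).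
rewrite mulr_sumr -sumEFin; apply: eq_bigr => i _.
rewrite integralZl //; last exact: (integrable_indic nu (pmA i)).
rewrite integral_indic ?setIT ?part_nu //; last exact: pmA.
transitivity ((c i)%:E * (N%:R^-1)%:E)%E; first by congr (_ * _)%E; exact: part_nu i.
by rewrite -EFinM mulrC.
Qed.


Lemma Rint_step c : \int[nu]_x step c x = N%:R^-1 * \sum_(i < N) c i.
Proof. by rewrite /Rintegral step_integral. Qed.

Lemma err_le (f : T -> R) (M K : R) : @measurable_fun _ _ (borelT T) R setT f ->
  (forall x, `|f x| <= M) -> (forall i x, A i x -> `|f x - f (X i)| <= K) ->
  `|\int[nu]_x f x - N%:R^-1 * \sum_(i < N) f (X i)| <= K.
Proof.
move=> mf hM hK.
pose c := fun i => f (X i).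
have ic : nu.-integrable setT (EFin \o step c) := step_int c.
have if_ : nu.-integrable setT (EFin \o f) := @bnd_int _ _ _ nu f M mf hM.
rewrite -(Rint_step c) -RintegralB //.
have ifs : nu.-integrable setT (EFin \o (fun x => f x - step c x)).
  by rewrite (_ : _ \o _ = (fun x => (EFin \o f) x - (EFin \o step c) x)%E) //; exact: integrableB.
apply: le_trans (le_normr_Rintegral _ _) _ => //.
have iK : nu.-integrable setT (EFin \o cst K) := finite_measure_integrable_cst nu K (measurableT).
apply: le_trans (@le_Rintegral _ _ _ nu setT _ (cst K) _ _ _ _) _ => //.
- rewrite (_ : _ \o _ = abse \o (EFin \o (fun x => f x - step c x))) //.
  exact: integrable_abse.
- move=> x _; have [i Aix] := part_cover x; rewrite (stepE c i x Aix); exact: hK.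
rewrite Rintegral_cst //.
have -> : fine (nu setT) = 1.
  by rewrite (_ : nu setT = 1%E) //; exact: probability_setT.
by rewrite mulr1.
Qed.

Lemma measurable_open (U : set T) : open U -> @measurable _ (borelT T) U.
Proof. by move=> oU; apply: sub_sigma_algebra. Qed.

Lemma measurable_pt (y : T) : @measurable _ (borelT T) [set y].
Proof.
have cl : closed [set y] := @accessible_closed_set1 T (hausdorff_accessible (@metric_hausdorff R T)) y.
rewrite -[[set y]]setCK; apply: measurableC; apply: measurable_open.
exact: closed_openC.
Qed.

Definition gX (x : T) : T := if [pick i | `[< A i x >]] is Some i then X i else x.

Lemma gXE i x : A i x -> gX x = X i.
Proof.
move=> Aix; rewrite /gX; case: pickP => [j /asboolP Ajx|/(_ i)].
  by rewrite (part_uniq j i x Ajx Aix).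
by move/asboolP: Aix => ->.
Qed.

Definition cB (B : set T) (i : 'I_N) : R := (X i \in B)%:R.

Lemma gX_pre (B : set T) : gX @^-1` B = step (cB B) @^-1` [set 1].
Proof.
apply/seteqP; split => x /=; have [i Aix] := part_cover x;
  rewrite (stepE _ i x Aix) (gXE i x Aix) /cB.
  by move=> Bx; rewrite mem_set.
by case: (boolP (X i \in B)) => [/set_mem //|_ /eqP]; rewrite eq_sym oner_eq0.
Qed.

Lemma gX_meas : @measurable_fun _ _ (borelT T) (borelT T) setT gX.
Proof.
move=> _ B mB; rewrite setTI gX_pre -[X in measurable X]setTI.
exact: (step_meas (cB B)) (measurable_set1 1).
Qed.

Lemma nu_gX_pre (B : set T) : @measurable _ (borelT T) B ->
  nu (gX @^-1` B) = (N%:R^-1 * \sum_(i < N) cB B i)%:E.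
Proof.
move=> mB; rewrite -step_integral.
have mS : @measurable _ (borelT T) (gX @^-1` B).
  by rewrite -[X in measurable X]setTI; exact: gX_meas.
transitivity (\int[nu]_x (\1_(gX @^-1` B) x)%:E)%E.
  by rewrite integral_indic // setIT.
apply: eq_integral => x _; congr (_%:E).
have [i Aix] := part_cover x; rewrite (stepE _ i x Aix) indicE /cB.
congr (_%:R).
have e : (gX @^-1` B) x <-> B (X i) by rewrite /preimage /= (gXE i x Aix).
case: (boolP (x \in _)) => h1; case: (boolP (X i \in B)) => h2 //.
- by case/negP: h2; apply: mem_set; apply/e; exact: set_mem h1.
- by case/negP: h1; apply: mem_set; apply/e; exact: set_mem h2.
Qed.

End fixedN.

Section coupling.
Context {R : realType} (T : completeMetricType R) (nu : probability (borelT T) R)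
  (C : R) (N : nat) (A : 'I_N -> set T) (X : 'I_N -> T)
  (HP : tagged_partition nu C A X) (N0 : (0 < N)%N)
  (Hdiam : forall y z : T, @mdist R T y z <= C).

Definition phi (x : borelT T) : (borelT T * borelT T)%type := (gX T N A X x, x).

Lemma phi_meas : measurable_fun setT phi.
Proof. apply: measurable_fun_pair => //. exact: (@gX_meas _ T nu C N A X HP). Qed.

HB.instance Definition _ := isMeasurableFun.Build _ _ _ _ phi phi_meas.

Definition Pc := distribution nu phi.

Lemma Pc_coupling : coupling (empirical X) nu Pc.
Proof.
move=> B mB; split.
  transitivity (nu (gX T N A X @^-1` B)).
    transitivity (nu (phi @^-1` (B `*` setT))); first by [].
    congr (nu _); apply/seteqP; split => x /=; [case|move=> Bx; split] => //.
  rewrite (@nu_gX_pre _ T nu C N A X HP) // /empirical.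
  rewrite EFinM; congr (_ * _)%E; rewrite -sumEFin; apply: eq_bigr => i _.
  by rewrite /cB /dirac indicE.
transitivity (nu (phi @^-1` (setT `*` B))); first by [].
congr (nu _); apply/seteqP; split => x /=; [case|move=> Bx; split] => //.
Qed.

Let mA := @pmA _ T nu C N A X HP.
Let cov := @part_cover _ T nu C N A X HP.
Let gXE' := @gXE _ T nu C N A X HP.
Let pdiam := @part_diam _ T nu C N A X HP.
Let pX := @part_X _ T nu C N A X HP.

Definition Gs : set (borelT T * borelT T)%type := \bigcup_i ([set X i] `*` A i).

Lemma Gs_meas : measurable Gs.
Proof.
apply: countable_bigcupT_measurable; first exact: countableP.
move=> i; apply: measurableX; [exact: measurable_pt | exact: mA].
Qed.

Lemma Pc_Gs : Pc (~` Gs) = 0%E.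
Proof.
transitivity (nu (phi @^-1` (~` Gs))); first by [].
rewrite (_ : phi @^-1` _ = set0) ?measure0 //.
apply/seteqP; split => x //= nG; exfalso; apply: nG.
have [i Aix] := cov x.
exists i => //; split => //=.
by rewrite (gXE' i x Aix).
Qed.

Lemma Pc_cost : (\int[Pc]_z (@mdist R T z.1 z.2)%:E <= (C / N%:R)%:E)%E.
Proof.
pose h z := (C / N%:R + C * \1_(~` Gs) z)%:E.
have C0 : 0 <= C by apply: le_trans (Hdiam (point : T) point); exact: mdist_ge0.
apply: (@le_trans _ _ (\int[Pc]_z h z)%E).
  apply: le_integral_nm => z; first by rewrite lee_fin mdist_ge0.
  rewrite /h lee_fin indicE.
  case: (boolP (z \in ~` Gs)) => hz.
    rewrite mulr1; apply: le_trans (Hdiam _ _) _; rewrite lerDr.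
    by apply: divr_ge0.
  rewrite mulr0 addr0.
  have : Gs z by apply: contrapT => nG; case/negP: hz; exact: mem_set.
  case=> i _ [/= Xi1 Ai2]; rewrite Xi1; apply: pdiam Ai2.
  exact: pX.
rewrite (ae_eq_integral (cst (C / N%:R)%:E)) //.
- rewrite integral_cst //.
  rewrite [X in (_ * X)%E](_ : _ = 1%E) ?mule1 //.
  exact: (probability_setT Pc).
- apply/measurable_EFinP; apply: measurable_funD => //.
  apply: measurable_funM => //; apply: measurable_indic.
  exact: measurableC Gs_meas.
- exists (~` Gs); split; [exact: measurableC Gs_meas | exact: Pc_Gs |].
  move=> z /= nh; apply: contrapT => /contrapT Gz; apply: nh => _.
  by rewrite /h indicE memNset ?mulr0 ?addr0.
Qed.

Lemma W1_bounds : (0 <= W1 (empirical X) nu)%E /\ (W1 (empirical X) nu <= (C / N%:R)%:E)%E.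
Proof.
split.
  apply: le_ereal_inf_tmp => _ [P _ <-].
  by apply: integral_ge0 => z _; rewrite lee_fin mdist_ge0.
apply: ge_ereal_inf; exists (\int[Pc]_z (@mdist R T z.1 z.2)%:E)%E.
  by exists Pc => //; exact: Pc_coupling.
exact: Pc_cost.
Qed.

End coupling.

Lemma Cn_cvg (R : realType) (C : R) : (fun n : nat => C / n.+1%:R) @ \oo --> 0.
Proof.
rewrite (_ : (fun n => _) = (fun n => C * harmonic n)); last by apply/funext.
rewrite -(mulr0 C); apply: cvgMr; exact: cvg_harmonic.
Qed.

Section general.
Context {R : realType} (T : completeMetricType R) (nu : probability (borelT T) R)
  (C : R) (A : forall N : nat, 'I_N -> set T) (X : forall N : nat, 'I_N -> T)
  (HAX : forall N : nat, (0 < N)%N -> tagged_partition nu C (A N) (X N)).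

Lemma mdist_near (x : T) (P : T -> Prop) : (\forall y \near x, P y) ->
  exists2 d, 0 < d & forall y, @mdist R T x y < d -> P y.
Proof.
by move=> /metricType_numDomainType.nbhs_mdistP [d /= d0 h]; exists d.
Qed.

Lemma near_mdist (x : T) (P : T -> Prop) d : 0 < d ->
  (forall y, @mdist R T x y < d -> P y) -> \forall y \near x, P y.
Proof.
by move=> d0 h; apply/metricType_numDomainType.nbhs_mdistP; exists d.
Qed.

Lemma cont_meas (f : T -> R) : continuous f -> @measurable_fun _ _ (borelT T) R setT f.
Proof.
move=> /continuousP cf; apply: (measurability _ (RGenOpens.measurableE R)).
move=> _ [_ [a [b ->]] <-]; apply: measurableI => //.
by apply: sub_sigma_algebra; apply: cf; exact: interval_open.
Qed.

Definition sN (f : T -> R) (n : nat) (x : T) : R :=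
  @step R T n.+1 (A n.+1) (fun i => f (X n.+1 i)) x.

Let HPn n := HAX n.+1 isT.
Let cov n := @part_cover R T nu C n.+1 (A n.+1) (X n.+1) (HPn n).
Let pdiam n := @part_diam R T nu C n.+1 (A n.+1) (X n.+1) (HPn n).
Let pX n := @part_X R T nu C n.+1 (A n.+1) (X n.+1) (HPn n).

Lemma sN_E f n i x : A n.+1 i x -> sN f n x = f (X n.+1 i).
Proof. exact: (@stepE _ T nu C n.+1 (A n.+1) (X n.+1) (HAX n.+1 isT) _ i x). Qed.

Lemma pt_cvg (f : T -> R) x : continuous_at_pt f x -> (fun n => sN f n x) @ \oo --> f x.
Proof.
move=> cx; apply/cvgrPdist_lt => e e0.
have [d d0 hd] := mdist_near _ _ ((cvgrPdist_lt _ _).1 cx e e0).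
have hC := (cvgrPdist_lt _ _).1 (Cn_cvg _ C) d d0.
near=> n; have hn : `|0 - C / n.+1%:R| < d by near: n; apply: hC.
have [i Aix] := cov n x.
rewrite (sN_E f n i x Aix); apply: hd.
apply: le_lt_trans (pdiam n i x (X n.+1 i) Aix (pX n i)) _.
rewrite sub0r normrN in hn; exact: le_lt_trans (ler_norm _) hn.
Unshelve. all: end_near. Qed.

Lemma part1 (f : T -> R) (M : R) : @measurable_fun _ _ (borelT T) R setT f ->
  (forall x, `|f x| <= M) ->
  {ae nu, forall x : borelT T, continuous_at_pt f x} ->
  (fun N : nat => N%:R^-1 * \sum_(i < N) f (X N i)) @ \oo --> \int[nu]_x f x.
Proof.
move=> mf hM hae.
rewrite -cvg_shiftS /=.
have hint n : (\int[nu]_x (sN f n x)%:E =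
    (n.+1%:R^-1 * \sum_(i < n.+1) f (X n.+1 i))%:E)%E.
  exact: (@step_integral R T nu C n.+1 (A n.+1) (X n.+1) (HPn n) (fun i => f (X n.+1 i))).
have if_ := @bnd_int _ _ _ nu f M mf hM.
have h1 : forall n, @measurable_fun _ _ (borelT T) (\bar R) setT (fun x => (sN f n x)%:E).
  move=> n; apply/measurable_EFinP.
  exact: (@step_meas R T nu C n.+1 (A n.+1) (X n.+1) (HPn n)).
have h2 : @measurable_fun _ _ (borelT T) (\bar R) setT (EFin \o f).
  exact/measurable_EFinP.
have h3 : \forall x \ae nu, setT x -> (fun n => (sN f n x)%:E) @ \oo --> (EFin \o f) x.
  case: hae => Nn [mN N0 hN]; exists Nn; split => // x /= nQx.
  apply: hN => /= cx; apply: nQx => _.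
  by apply: cvg_EFin; [exact: nearW | exact: pt_cvg].
have h4 : nu.-integrable setT (cst M%:E).
  exact: (finite_measure_integrable_cst nu M measurableT).
have h5 : \forall x \ae nu, forall n, setT x -> (`|(sN f n x)%:E| <= cst M%:E x)%E.
  apply: aeW => x n _; rewrite /= lee_fin.
  have [i Aix] := cov n x; rewrite (sN_E f n i x Aix); exact: hM.
have [_ _ H] := dominated_convergence measurableT h1 h2 h3 h4 h5.
move: H; rewrite (_ : (fun n => _) = (fun n => (n.+1%:R^-1 * \sum_(i < n.+1) f (X n.+1 i))%:E)); last first.
  by apply/funext => n; exact: hint.
have e : (\int[nu]_x (EFin \o f) x)%E = (\int[nu]_x f x)%:E.
  by rewrite /Rintegral fineK //; exact: integrable_fin_num.
rewrite e; by move/fine_cvgP => [_].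
Qed.

Lemma diamC (y z : T) : @mdist R T y z <= C.
Proof.
have HP1 := HAX 1 isT.
have [i Ay] := @part_cover R T nu C 1 (A 1) (X 1) HP1 y.
have [j Az] := @part_cover R T nu C 1 (A 1) (X 1) HP1 z.
have ij : i = j by rewrite (ord1 i) (ord1 j).
rewrite -ij in Az.
have := @part_diam R T nu C 1 (A 1) (X 1) HP1 i y z Ay Az.
by rewrite divr1.
Qed.

Lemma hol_ge0 (a : R) (f : T -> R) : (0 <= hol a f)%E.
Proof. by apply: ereal_sup_ubound; left. Qed.

Lemma hol_le (a : R) (f : T -> R) (h : R) : hol a f = h%:E -> forall x y : T,
  `|f x - f y| <= h * (@mdist R T x y) `^ a.
Proof.
move=> hh x y; have [->|xy] := eqVneq x y.
  by rewrite subrr normr0 mulr_ge0 ?powR_ge0 // -lee_fin -hh hol_ge0.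
have d0 : 0 < @mdist R T x y by rewrite mdist_gt0.
have pa0 : 0 < (@mdist R T x y) `^ a by apply: powR_gt0.
rewrite -ler_pdivrMr //; rewrite -lee_fin -hh.
apply: ereal_sup_ubound; right; exists x, y; split => //; exact/eqP.
Qed.

Lemma hol_cont (a : R) (f : T -> R) (h : R) : 0 < a -> hol a f = h%:E -> continuous f.
Proof.
move=> a0 hh x; apply/cvgrPdist_lt => e e0.
have h0 : 0 <= h by rewrite -lee_fin -hh hol_ge0.
have eh0 : 0 < e / (h + 1) by rewrite divr_gt0 // ltr_wpDl.
pose d := (e / (h + 1)) `^ a^-1.
have d0 : 0 < d by apply: powR_gt0.
have da : d `^ a = e / (h + 1).
  by rewrite /d -powRrM mulVf ?gt_eqF // powRr1 // ltW.
apply: (near_mdist x _ d d0) => y hy.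
apply: le_lt_trans (hol_le _ _ _ hh x y) _.
have : (@mdist R T x y) `^ a < e / (h + 1).
  by rewrite -da; apply: gt0_ltr_powR => //; rewrite nnegrE ?mdist_ge0 ?ltW.
move=> lt.
apply: (@le_lt_trans _ _ (h * (e / (h + 1)))).
  by apply: ler_wpM2l => //; exact: ltW.
rewrite mulrCA -[ltRHS]mulr1 ltr_pM2l // ltr_pdivrMr ?ltr_wpDl //.
by rewrite mul1r ltrDl.
Qed.

Lemma powR_div (c n a : R) : 0 <= c -> 0 <= n -> (c / n) `^ a = c `^ a / n `^ a.
Proof.
move=> c0 n0; rewrite powRM ?invr_ge0 //; congr (_ * _).
rewrite -powR_inv1 // -powRrM (mulrC (-1)) powRrM powR_inv1 //; exact: powR_ge0.
Qed.

Lemma part2 (a : R) : 0 < a <= 1 -> forall N : nat, (0 < N)%N ->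
  forall f : T -> R, compact_support f -> (hol a f < +oo)%E ->
  (`| \int[nu]_x f x - N%:R^-1 * \sum_(i < N) f (X N i) |%:E
        <= (C `^ a / N%:R `^ a)%:E * hol a f)%E.
Proof.
move=> /andP[a0 a1] N N0 f _ hfin.
have [h hh] : exists h, hol a f = h%:E.
  by exists (fine (hol a f)); rewrite fineK // ge0_fin_numE // hol_ge0.
have h0 : 0 <= h by rewrite -lee_fin -hh hol_ge0.
have cf := hol_cont _ _ _ a0 hh.
have mf := cont_meas _ cf.
have C0 : 0 <= C by apply: le_trans (diamC point point); exact: mdist_ge0.
have hM x : `|f x| <= `|f point| + h * C `^ a.
  rewrite -[f x](subrK (f point)) (le_trans (ler_normD _ _)) // addrC lerD2l.
  apply: le_trans (hol_le _ _ _ hh x point) _; apply: ler_wpM2l => //.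
  by apply: (ge0_ler_powR (ltW a0)); rewrite ?nnegrE ?mdist_ge0 // diamC.
have HP := HAX N N0.
have hK i x : A N i x -> `|f x - f (X N i)| <= h * (C / N%:R) `^ a.
  move=> Aix; apply: le_trans (hol_le _ _ _ hh x (X N i)) _; apply: ler_wpM2l => //.
  apply: (ge0_ler_powR (ltW a0)); rewrite ?nnegrE ?mdist_ge0 ?divr_ge0 //.
  exact: (@part_diam R T nu C N (A N) (X N) HP i x (X N i) Aix (@part_X R T nu C N (A N) (X N) HP i)).
have := @err_le R T nu C N (A N) (X N) HP f _ _ mf hM hK.
rewrite hh -EFinM lee_fin powR_div //.
by rewrite [X in _ <= X]mulrC.
Qed.

End general.

Theorem lemma16 (R : realType) (T : completeMetricType R)
  (lambda : {measure set (borelT T) -> \bar R})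
  (nu : probability (borelT T) R) (nu_ac : nu `<< lambda)
  (C : R) (C_gt0 : 0 < C)
  (A : forall N : nat, 'I_N -> set T) (X : forall N : nat, 'I_N -> T)
  (HAX : forall N : nat, (0 < N)%N -> tagged_partition nu C (A N) (X N)) :
  (* (1) *)
  ((forall f : T -> R,
      measurable_fun (setT : set (borelT T)) f ->
      compact_support f ->
      (exists M : R, forall x, `|f x| <= M) ->
      {ae nu, forall x : borelT T, continuous_at_pt f x} ->
      (fun N : nat => \int[nu]_x f x - N%:R^-1 * \sum_(i < N) f (X N i))
        @ \oo --> (0 : R))
   /\ (* weak convergence of nu^E_X to nu *)
   (forall f : T -> R, continuous f -> (exists M : R, forall x, `|f x| <= M) ->
      (fun N : nat => N%:R^-1 * \sum_(i < N) f (X N i))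
        @ \oo --> \int[nu]_x f x)
   /\ (* W1 convergence when Omega has compact closure *)
   (compact [set: T] ->
      (fun N : nat => W1 (empirical (X N)) nu) @ \oo --> (0 : \bar R)%E))
  /\
  (* (2) *)
  ((forall (a : R), 0 < a <= 1 -> forall N : nat, (0 < N)%N ->
     forall f : T -> R, compact_support f -> (hol a f < +oo)%E ->
     (`| \int[nu]_x f x - N%:R^-1 * \sum_(i < N) f (X N i) |%:E
        <= (C `^ a / N%:R `^ a)%:E * hol a f)%E)
   /\
   (forall N : nat, (0 < N)%N -> (W1 (empirical (X N)) nu <= (C / N%:R)%:E)%E)).

Proof.
have Hdiam := @diamC R T nu C A X HAX.
split; last first.
  split; first exact: (@part2 R T nu C A X HAX).
  by move=> N N0; exact: (@W1_bounds R T nu C N (A N) (X N) (HAX N N0) Hdiam).2.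
split; [|split].
- move=> f mf _ [M hM] hae.
  have h := @part1 R T nu C A X HAX f M mf hM hae.
  have := cvgB (cvg_cst (\int[nu]_x f x)) h; rewrite subrr; exact.
- move=> f cf [M hM].
  apply: (@part1 R T nu C A X HAX f M (@cont_meas R T f cf) hM).
  by apply: aeW => x; exact: cf.
- move=> _; rewrite -cvg_shiftS.
  have hb : \forall n \near \oo, (cst 0%E n <= W1 (empirical (X n.+1)) nu
      <= (fun n => (C / n.+1%:R)%:E) n)%E.
    apply: nearW => n /=.
    have [b1 b2] := @W1_bounds R T nu C n.+1 (A n.+1) (X n.+1) (HAX n.+1 isT) Hdiam.
    by rewrite b1 b2.
  have hup : (fun n => (C / n.+1%:R)%:E) @ \oo --> 0%:E.
    by apply: cvg_EFin; [exact: nearW | exact: Cn_cvg].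
  exact: (squeeze_cvge hb (cvg_cst _) hup).
Qed.
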